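(* Let $I,J$ be countable sets with nested finite subsets $I_1\subset I_2\subset\cdots$, $\bigcup_nI_n=I$, and $J_1\subset J_2\subset\cdots$, $\bigcup_nJ_n=J$, and let $a:I\to J$ be a bijection with $$\lim_{n\to\infty}\frac{|a(I_n)\cap J_n|}{|I_n|}=\lim_{n\to\infty}\frac{|J_n|}{|I_n|}=1.$$ Then for every bounded operator $T\in B(\ell^2(J))$ and every $p\in\mathbb{N}^*$, $$p\text{-}\lim_n\frac{1}{|J_n|}\sum_{j\in J_n}T_{j,j}=p\text{-}\lim_n\frac{1}{|I_n|}\sum_{i\in I_n}T_{a(i),a(i)},$$ i.e. $\mu(T)=\mu(a_*(T))$.
   Context: $\{\epsilon_j\}_{j\in J}$ and $\{\delta_i\}_{i\in I}$ are the canonical orthonormal bases of $\ell^2(J)$ and $\ell^2(I)$; $T_{j,k}=\langle T\epsilon_j,\epsilon_k\rangle$. $a_*(T)\in B(\ell^2(I))$ is defined by $\langle a_*(T)\delta_{i_1},\delta_{i_2}\rangle=\langle T\epsilon_{a(i_1)},\epsilon_{a(i_2)}\rangle$. $\mathbb{N}^*$ is the set of free ultrafilters on $\mathbb{N}$, and for a bounded complex sequence $\mathbf{x}$, $p\text{-}\lim\mathbf{x}=c$ iff for every $\varepsilon>0$ the set $\{n:|x_n-c|<\varepsilon\}$ belongs to $p$. For an operator $T$ on $\ell^2(J)$ (resp. $\ell^2(I)$) the ultrafilter measure $\mu(T)(p)$ is $p\text{-}\lim_n\frac1{|J_n|}\sum_{j\in J_n}T_{j,j}$ (resp. with $I_n$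 and the basis $\delta_i$). *)

(* Defs.v *)
From HB Require Import structures.
From mathcomp Require Import all_boot all_order all_algebra.
From mathcomp Require Import finmap.
From mathcomp Require Import complex.
From mathcomp Require Import boolp classical_sets cardinality reals topology normedtype sequences.
Set Implicit Arguments. Unset Strict Implicit. Unset Printing Implicit Defensive.
Import Order.TTheory GRing.Theory Num.Theory.
Local Open Scope ring_scope.
Local Open Scope classical_set_scope.
Local Open Scope complex_scope.

Definition free_ultrafilter (p : set (set nat)) : Prop :=
  [/\ p setT, ~ p set0,
      (forall A B : set nat, p A -> p B -> p (A `&` B)),
      (forall A B : set nat, A `<=` B -> p A -> p B) &
      (forall A : set nat, p A \/ p (~` A))] /\
  (forall A : set nat, finite_set A -> ~ p A).

Definition is_plim (R : realType) (p : set (set nat)) (x : nat -> R[i]) (c : R[i]) : Prop :=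
  forall eps : R[i], 0 < eps -> p [set n | `|x n - c| < eps].

(* A matrix (T_{j,k})_{j,k in J}, T_{j,k} = <T e_j, e_k>, defines a bounded operator on
   l^2(J): the sesquilinear form (x,y) |-> sum_{j,k} T_{j,k} x_j conj(y_k) on finitely
   supported vectors is bounded by M ||x|| ||y||. *)
Definition bounded_op_matrix (R : realType) (J : countType) (T : J -> J -> R[i]) : Prop :=
  exists M : R[i], 0 <= M /\
    forall (F : {fset J}) (x y : J -> R[i]),
      `| \sum_(j <- F) \sum_(k <- F) T j k * x j * (y k)^* | ^+ 2
        <= M ^+ 2 * (\sum_(j <- F) `|x j| ^+ 2) * (\sum_(k <- F) `|y k| ^+ 2).

(* Main.v *)
Require Import Defs.
From HB Require Import structures.
From mathcomp Require Import all_boot all_order all_algebra.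
From mathcomp Require Import finmap.
From mathcomp Require Import complex.
From mathcomp Require Import boolp classical_sets cardinality reals topology normedtype sequences.
From mathcomp Require Import ring lra zify.
Import Order.TTheory GRing.Theory Num.Theory.
Import numFieldNormedType.Exports.
Local Open Scope ring_scope.
Local Open Scope classical_set_scope.
Section UF.
Variable (p : set (set nat)).
Hypothesis Hp : free_ultrafilter p.

Lemma uf_mono {A B : set nat} : A `<=` B -> p A -> p B.
Proof. by case: Hp => -[_ _ _ H _] _; apply: H. Qed.

Lemma uf_I {A B : set nat} : p A -> p B -> p (A `&` B).
Proof. by case: Hp => -[_ _ H _ _] _; apply: H. Qed.

Lemma uf_T : p setT.
Proof. by case: Hp => -[H _ _ _ _] _. Qed.

Lemma uf_0 : ~ p set0.
Proof. by case: Hp => -[_ H _ _ _] _. Qed.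

Lemma uf_C {A : set nat} : ~ p A -> p (~` A).
Proof. by case: Hp => -[_ _ _ _ H] _; case: (H A). Qed.

Lemma uf_ge N : p [set n | (N <= n)%N].
Proof.
case: Hp => _ Hfin.
have : ~ p `I_N by apply: Hfin; apply: finite_II.
move/uf_C; apply: uf_mono => n /= h; rewrite leqNgt; apply/negP => h2; apply: h; exact: h2.
Qed.

Lemma uf_near (P : nat -> Prop) : (\forall n \near \oo, P n) -> p [set n | P n].
Proof.
case=> N _ HN. apply: (uf_mono _ (uf_ge N)) => n /= hn; exact: HN.
Qed.

Variable R : realType.

Lemma plimR_exists (x : nat -> R) (K : R) : (forall n, `|x n| <= K) ->
  exists c : R, forall e : R, 0 < e -> p [set n | `|x n - c| < e].
Proof.
move=> hK.
pose S := [set t : R | p [set n | t <= x n]].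
have hS : has_sup S.
  split.
    exists (- K); rewrite /S /=; apply: (uf_mono _ uf_T) => n _.
    by have := hK n; rewrite ler_norml => /andP[].
  exists K => t /= ht; rewrite leNgt; apply/negP => Kt.
  apply: uf_0; apply: (uf_mono _ ht) => n /= tn.
  have := hK n; rewrite ler_norml => /andP[_ h].
  have := lt_le_trans Kt tn => h2. by have := lt_le_trans h2 h; rewrite ltxx.
exists (sup S) => e e0.
have [t St lt] := sup_adherent e0 hS.
have nS : ~ S (sup S + e / 2).
  move=> /(sup_upper_bound hS) /=; lra.
have := uf_I St (uf_C nS); apply: uf_mono => n /= [h1 h2].
move/negP: h2; rewrite -ltNge => h2.
rewrite ltr_norml; apply/andP; split; lra.
Qed.
End UF.
Local Open Scope complex_scope.
Section Cplx.
Variable R : realType.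

Lemma normC_real (k : R) : `|k%:C| = `|k|%:C.
Proof. by rewrite normc_def /= expr0n addr0 sqrtr_sqr. Qed.

Lemma norm_i : `|'i%C : R[i]| = 1.
Proof. by rewrite normc_def /= expr0n add0r expr1n sqrtr1. Qed.

Lemma plim_cplx (p : set (set nat)) (Hp : free_ultrafilter p) (xr xi : nat -> R) (cr ci : R) :
  (forall e : R, 0 < e -> p [set n | `|xr n - cr| < e]) ->
  (forall e : R, 0 < e -> p [set n | `|xi n - ci| < e]) ->
  is_plim p (fun n => (xr n)%:C + 'i * (xi n)%:C) (cr%:C + 'i * ci%:C).
Proof.
move=> hr hi [a b]; rewrite ltcE /= => /andP[/eqP b0 a0]; subst b.
have a2 : 0 < a / 2 by lra.
have := uf_I _ Hp (hr _ a2) (hi _ a2); apply: (uf_mono _ Hp) => n /= [h1 h2].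
rewrite (_ : _ - _ = (xr n - cr)%:C + 'i * (xi n - ci)%:C); last first.
  by rewrite !rmorphB /=; ring.
apply: le_lt_trans (ler_normD _ _) _.
rewrite normrM norm_i mul1r !normC_real -rmorphD /= complexr0 ltcR; lra.
Qed.
End Cplx.
Section Ineq.
Variable R : realType.

Lemma key_ineq (K al be ga SC DA DB d : R) : 0 <= K -> 0 < al -> 0 < be ->
  0 <= ga -> ga <= al -> `|SC| <= K * ga -> `|DA| <= K * (al - ga) ->
  `|DB| <= K * (be - ga) -> `|1 - ga / al| < d -> `|1 - be / al| < d ->
  `|1 - be / al| < 1 / 2 ->
  `|al^-1 * (SC + DA) - be^-1 * (SC + DB)| <= 7 * K * d.
Proof.
move=> K0 al0 be0 ga0 gaal hSC hDA hDB.
set u := ga / al; set v := be / al.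
move=> hu hv hv2.
set s := SC / al; set x := DA / al; set y := DB / al.
have ial : 0 < al^-1 by rewrite invr_gt0.
have nal : forall z, `|z / al| = `|z| / al.
  by move=> z; rewrite normrM normfV (gtr0_norm al0).
have hs : `|s| <= K * u.
  by rewrite /s nal /u mulrA ler_wpM2r // ltW.
have hx : `|x| <= K * (1 - u).
  rewrite /x nal /u (_ : K * (1 - ga / al) = K * (al - ga) / al).
    by rewrite ler_wpM2r // ltW.
  by field; rewrite gt_eqF.
have hy : `|y| <= K * (v - u).
  rewrite /y nal /u /v (_ : K * (be / al - ga / al) = K * (be - ga) / al).
    by rewrite ler_wpM2r // ltW.
  by field; rewrite gt_eqF.
move: hu hv hv2; rewrite !ltr_norml => /andP[hu1 hu2] /andP[hv1 hv2] /andP[hv3 hv4].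
have v0 : 1 / 2 < v by lra.
have u1 : u <= 1 by rewrite /u ler_pdivrMr // mul1r.
have u0 : 0 <= u by rewrite /u divr_ge0 // ltW.
have -> : al^-1 * (SC + DA) - be^-1 * (SC + DB) = x + (s * (v - 1) - y) / v.
  by rewrite /x /s /y /v; field; rewrite !gt_eqF.
apply: le_trans (ler_normD _ _) _.
rewrite [X in _ + X]normrM normfV (gtr0_norm (_ : 0 < v)); last by lra.
have hw : `|s * (v - 1) - y| <= `|s| * `|v - 1| + `|y|.
  by apply: le_trans (ler_normB _ _) _; rewrite normrM.
have w1 : `|v - 1| <= d by rewrite ler_norml; apply/andP; split; lra.
have hsw : `|s| * `|v - 1| <= K * d.
  apply: le_trans (_ : K * u * d <= _).
    by apply: ler_pM => //; rewrite normr_ge0.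
  have : 0 <= K * d by apply: mulr_ge0 => //; lra.
  nra.
have hq : `|s * (v - 1) - y| / v <= 6 * K * d.
  rewrite ler_pdivrMr; last by lra.
  have Kd : 0 <= K * d by apply: mulr_ge0 => //; lra.
  nra.
have : `|x| <= K * d by apply: (le_trans hx); apply: ler_wpM2l => //; lra.
lra.
Qed.
End Ineq.
Section Main.
Variable R : realType.

Lemma sum_split (J : choiceType) (A B : {fset J}) (g : J -> R) :
  \sum_(j <- A) g j = \sum_(j <- (A `&` B)%fset) g j + \sum_(j <- (A `\` B)%fset) g j.
Proof.
rewrite (big_fsetID _ (mem B)) /=; congr (_ + _); apply: eq_fbigl => j;
  by rewrite !inE /= andbC.
Qed.

Lemma sum_img (I J : choiceType) (a : I -> J) (S : {fset I}) (g : J -> R) :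
  injective a ->
  \sum_(i <- S) g (a i) = \sum_(j <- [fset a i | i in S]%fset) g j.
Proof. by move=> ia; rewrite big_imfset //= => x y _ _; apply: ia. Qed.

Lemma card_img (I J : choiceType) (a : I -> J) (S : {fset I}) :
  injective a -> #|` [fset a i | i in S]%fset| = #|` S|.
Proof. move=> ia; by rewrite card_imfset //=. Qed.

Lemma sum_bound (J : choiceType) (S : {fset J}) (g : J -> R) (K : R) :
  (forall j, `|g j| <= K) -> `|\sum_(j <- S) g j| <= K * #|` S|%:R.
Proof.
move=> hK; apply: le_trans (ler_norm_sum _ _ _) _.
rewrite card_fset_sum1 natr_sum mulr_sumr; apply: ler_sum => j _.
by rewrite mulr1.
Qed.

Lemma avg_bound (J : choiceType) (S : {fset J}) (g : J -> R) (K : R) : 0 <= K ->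
  (forall j, `|g j| <= K) -> `|(#|` S|%:R)^-1 * \sum_(j <- S) g j| <= K.
Proof.
move=> K0 hK; rewrite normrM normfV normr_nat.
have [->|n0] := eqVneq #|` S| 0%N; first by rewrite invr0 mul0r.
rewrite mulrC ler_pdivrMr; last by rewrite ltr0n lt0n.
exact: sum_bound.
Qed.
End Main.
Section Main2.
Variable R : realType.

Lemma real_main (I J : countType) (In : nat -> {fset I}) (Jn : nat -> {fset J}) (a : I -> J)
  (ia : injective a)
  (Hlim1 : ((fun n => #|` ([fset a i | i in In n] `&` Jn n)%fset |%:R / #|` In n |%:R) : nat -> R)
             @ \oo --> (1 : R))
  (Hlim2 : ((fun n => #|` Jn n |%:R / #|` In n |%:R) : nat -> R) @ \oo --> (1 : R))
  (f : J -> R) (K : R) (K0 : 0 <= K) (hK : forall j, `|f j| <= K)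
  (p : set (set nat)) (Hp : free_ultrafilter p) :
  exists c : R,
    (forall e : R, 0 < e -> p [set n | `|(#|` Jn n |%:R)^-1 * \sum_(j <- Jn n) f j - c| < e]) /\
    (forall e : R, 0 < e -> p [set n | `|(#|` In n |%:R)^-1 * \sum_(i <- In n) f (a i) - c| < e]).
Proof.
have [c hc] := @plimR_exists p Hp R _ K (fun n => @avg_bound R _ (Jn n) f K K0 hK).
exists c; split => // e e0.
have claim : exists N, forall n, (N <= n)%N ->
  `|(#|` In n |%:R)^-1 * \sum_(i <- In n) f (a i) -
    (#|` Jn n |%:R)^-1 * \sum_(j <- Jn n) f j| < e / 2.
  pose d := e / 2 / (8 * (K + 1)).
  have d0 : 0 < d by rewrite /d divr_gt0 // ?divr_gt0 //; lra.
  have h7 : 7 * K * d < e / 2.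
    rewrite /d mulrA ltr_pdivrMr; last by lra.
    nra.
  have h2 : (0 : R) < 1 / 2 by lra.
  move/cvgrPdist_lt: Hlim1 => L1; move/cvgrPdist_lt: Hlim2 => L2.
  have := L1 _ d0; have := L1 _ h2; have := L2 _ d0; have := L2 _ h2.
  move=> N1 N2 N3 N4.
  case: N1 => M1 _ H1; case: N2 => M2 _ H2; case: N3 => M3 _ H3; case: N4 => M4 _ H4.
  exists (maxn M1 (maxn M2 (maxn M3 M4))) => n hn.
  have n1 := H1 n ltac:(simpl; lia).
  have n2 := H2 n ltac:(simpl; lia).
  have n3 := H3 n ltac:(simpl; lia).
  have n4 := H4 n ltac:(simpl; lia).
  simpl in n1, n2, n3, n4.
  set A := [fset a i | i in In n]%fset in n1 n2 n3 n4 *.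
  set B := Jn n in n1 n2 n3 n4 *.
  have al0 : (0 : R) < #|` In n|%:R.
    rewrite ltr0n lt0n; apply/negP => /eqP h0; move: n3.
    rewrite h0 invr0 mulr0 subr0 normr1; lra.
  have be0 : (0 : R) < #|` B|%:R.
    rewrite ltr0n lt0n; apply/negP => /eqP h0; move: n1.
    rewrite h0 mul0r subr0 normr1; lra.
  have eA : (#|` In n|%:R : R) = #|` (A `&` B)%fset|%:R + #|` (A `\` B)%fset|%:R.
    by rewrite -natrD cardfsID /A card_img.
  have eB : (#|` B|%:R : R) = #|` (A `&` B)%fset|%:R + #|` (B `\` A)%fset|%:R.
    by rewrite -natrD fsetIC cardfsID.
  rewrite (@sum_img R _ _ a (In n) f ia) -/A (@sum_split R _ A B f) (@sum_split R _ B A f) (fsetIC B A).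
  apply: le_lt_trans h7.
  apply: (@key_ineq R K _ _ (#|` (A `&` B)%fset|%:R)) => //.
  - by rewrite eA lerDl.
  - exact: (@sum_bound R _ _ f K hK).
  - by rewrite eA (addrC (#|` (A `&` B)%fset|%:R)) addrK; exact: (@sum_bound R _ _ f K hK).
  - by rewrite eB (addrC (#|` (A `&` B)%fset|%:R)) addrK; exact: (@sum_bound R _ _ f K hK).
case: claim => N HN.
have e2 : 0 < e / 2 by lra.
have := uf_I _ Hp (hc _ e2) (uf_ge _ Hp N); apply: (uf_mono _ Hp) => n /= [h1 h2].
have := HN n h2 => h3.
rewrite (_ : _ - c = (#|` In n|%:R^-1 * \sum_(i <- In n) f (a i) -
    #|` Jn n|%:R^-1 * \sum_(j <- Jn n) f j) + (#|` Jn n|%:R^-1 * \sum_(j <- Jn n) f j - c)); last by ring.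
apply: le_lt_trans (ler_normD _ _) _; lra.
Qed.
End Main2.
Section Final.
Variable R : realType.
Local Open Scope complex_scope.

Lemma avg_decomp (X : Type) (S : seq X) (g : X -> R[i]) (n : nat) :
  (n%:R : R[i])^-1 * \sum_(j <- S) g j =
  ((n%:R : R)^-1 * \sum_(j <- S) complex.Re (g j))%:C +
  'i * ((n%:R : R)^-1 * \sum_(j <- S) complex.Im (g j))%:C.
Proof.
rewrite !rmorphM /= fmorphV /= rmorph_nat !rmorph_sum /=.
rewrite (eq_bigr (fun j => (complex.Re (g j))%:C + 'i * (complex.Im (g j))%:C)); last first.
  by move=> j _; rewrite -complexE.
rewrite big_split /= -mulr_sumr; ring.
Qed.

Lemma diag_bound (J : countType) (T : J -> J -> R[i]) : bounded_op_matrix T ->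
  exists m : R, 0 <= m /\ forall j, `|complex.Re (T j j)| <= m /\ `|complex.Im (T j j)| <= m.
Proof.
case=> -[m b] [M0 HM].
have b0 : b = 0 by have := ger0_Im M0.
subst b; rewrite complexr0 ler0c in M0.
exists m; split => // j.
have := HM [fset j]%fset (fun _ => 1) (fun _ => 1).
rewrite !big_seq_fset1 /= conjC1.
rewrite !mulr1 normr1 expr1n !mulr1.
rewrite -add_Re2_Im2 complexr0 -rmorphXn /= lecR => h.
by rewrite !ler_norml; split; apply/andP; split; nra.
Qed.
End Final.
Local Close Scope complex_scope.

Theorem proposition8p1 (R : realType) (I J : countType)
  (In : nat -> {fset I}) (Jn : nat -> {fset J}) (a : I -> J)
  (HInest : forall n, (In n `<=` In n.+1)%fset)
  (HIcov : forall i : I, exists n, i \in In n)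
  (HJnest : forall n, (Jn n `<=` Jn n.+1)%fset)
  (HJcov : forall j : J, exists n, j \in Jn n)
  (Ha : bijective a)
  (Hlim1 : ((fun n => #|` ([fset a i | i in In n] `&` Jn n)%fset |%:R / #|` In n |%:R) : nat -> R)
             @ \oo --> (1 : R))
  (Hlim2 : ((fun n => #|` Jn n |%:R / #|` In n |%:R) : nat -> R) @ \oo --> (1 : R))
  (T : J -> J -> R[i]) (HT : bounded_op_matrix T)
  (p : set (set nat)) (Hp : free_ultrafilter p) :
  exists c : R[i],
    is_plim p (fun n => (#|` Jn n |%:R)^-1 * \sum_(j <- Jn n) T j j) c /\
    is_plim p (fun n => (#|` In n |%:R)^-1 * \sum_(i <- In n) T (a i) (a i)) c.
Proof.
have ia := bij_inj Ha.
have [m [m0 hm]] := @diag_bound R J T HT.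
have [cr [hr1 hr2]] := @real_main R I J In Jn a ia Hlim1 Hlim2 (fun j => complex.Re (T j j)) m m0
  (fun j => proj1 (hm j)) p Hp.
have [ci [hi1 hi2]] := @real_main R I J In Jn a ia Hlim1 Hlim2 (fun j => complex.Im (T j j)) m m0
  (fun j => proj2 (hm j)) p Hp.
exists ((cr%:C)%C + ('i%C * (ci%:C)%C)).
split.
- move=> eps he; have := @plim_cplx R p Hp _ _ _ _ hr1 hi1 eps he.
  by apply: (uf_mono _ Hp) => n /=; rewrite avg_decomp.
- move=> eps he; have := @plim_cplx R p Hp _ _ _ _ hr2 hi2 eps he.
  by apply: (uf_mono _ Hp) => n /=; rewrite avg_decomp.
Qed.
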